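(* Let $A,B$ be Pareto sets of size $n$ each, sorted lexicographically, and let $k$ be the size of their Pareto sum. The (heap-based) Sort \& Compare algorithm computes the Pareto sum of $A$ and $B$ in $\mathcal{O}(n^2\log n)$ time using $\mathcal{O}(n+k)$ space.
   Context: For $p,p'\in\mathbb{R}^2$, $p$ dominates $p'$ if $p\neq p'$, $p.x\le p'.x$ and $p.y\le p'.y$. A Pareto set is a set $S\subset\mathbb{R}^2$ in which no point dominates another; $S_i$ denotes the element of rank $i$ in lexicographic order. The Minkowski matrix is $M_{ij}=A_i+B_j$; each column is a lexicographically sorted Pareto set. The Pareto sum $C$ is the set of entries of $M$ not dominated by any entry of $M$. The Sort \& Compare algorithm: initialize a min-heap (lexicographic order) with the first row $M_{11},\dots,M_{1n}$, each element remembering its matrix position. Repeatedly extract the minimum $M_{ij}$; if $C$ is empty or $M_{ij}$ is neither dominated by nor equal to the last element added to $C$, append $M_{ij}$ to $C$; then, if $i<n$, insert $M_{i+1,j}$ into the heap. Stop when the heap is empty. *)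

(* Defs.v *)
From mathcomp Require Import all_boot all_order all_algebra.
Set Implicit Arguments. Unset Strict Implicit. Unset Printing Implicit Defensive.
Import Order.TTheory GRing.Theory Num.Theory.
Local Open Scope ring_scope.

Section Pareto.
Variable R : realDomainType.
Definition pt := (R * R)%type.

Definition dominates (p q : pt) : bool :=
  [&& p != q, p.1 <= q.1 & p.2 <= q.2].

Definition lexle (p q : pt) : bool := (p.1 < q.1) || ((p.1 == q.1) && (p.2 <= q.2)).
Definition lexlt (p q : pt) : bool := (p.1 < q.1) || ((p.1 == q.1) && (p.2 < q.2)).

Definition sorted_pareto (S : seq pt) : bool :=
  sorted lexlt S && all (fun p => all (fun q => ~~ dominates p q) S) S.

Definition padd (p q : pt) : pt := (p.1 + q.1, p.2 + q.2).

(* Minkowski matrix M_ij = A_i + B_j (0-indexed) *)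
Definition mink (A B : seq pt) (i j : nat) : pt := padd (nth 0 A i) (nth 0 B j).

Definition mink_entries (A B : seq pt) : seq pt := [seq padd a b | a <- A, b <- B].

Definition in_pareto_sum (A B : seq pt) (p : pt) : bool :=
  (p \in mink_entries A B) && all (fun q => ~~ dominates q p) (mink_entries A B).

Definition pareto_sum_size (A B : seq pt) : nat :=
  size (undup [seq p <- mink_entries A B | in_pareto_sum A B p]).

(* heap entries: a point with its matrix position (i, j) *)
Definition hentry := (pt * (nat * nat))%type.

(* cost of one heap operation (insert / extract-min) on a binary heap of
   size h : floor(log2 h) + 1 *)
Definition hcost (h : nat) : nat := (trunc_log 2 h).+1.

(* state: heap contents, output C, elapsed time, peak space *)
Definition state := (seq hentry * seq pt * nat * nat)%type.

Definition sc_init (A B : seq pt) (n : nat) : state :=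
  let h := [seq (mink A B 0 j, (0%N, j)) | j <- iota 0 n] in
  (h, [::], (\sum_(j < n) hcost j)%N, size h).

Definition sc_step (A B : seq pt) (n : nat) (st : state) : state :=
  let: (h, C, t, s) := st in
  match h with
  | [::] => st
  | x :: _ =>
    (* extract-min (lexicographic on the point; first minimum in the list) *)
    let i0 := find (fun e : hentry => all (fun e' : hentry => lexle e.1 e'.1) h) h in
    let e := nth x h i0 in
    let h1 := take i0 h ++ drop i0.+1 h in
    let t1 := (t + hcost (size h))%N.+1 in
    let C1 := if (C == [::]) || ~~ (dominates (last 0 C) e.1 || (last 0 C == e.1))
              then rcons C e.1 else C in
    let: (i, j) := e.2 in
    let: (h2, t2) := if (i.+1 < n)%N then
                       (rcons h1 (mink A B i.+1 j, (i.+1, j)), (t1 + hcost (size h1))%N)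
                     else (h1, t1) in
    (h2, C1, t2, maxn s (size h2 + size C1)%N)
  end.

(* run the loop for n*n iterations (each iteration extracts one entry of M) *)
Definition sort_compare (A B : seq pt) (n : nat) : state :=
  iter (n * n)%N (sc_step A B n) (sc_init A B n).

End Pareto.

(* Main.v *)
Require Import Defs.
From mathcomp Require Import all_boot all_order all_algebra zify.
Import Order.TTheory GRing.Theory Num.Theory.
Local Open Scope ring_scope.
Set Implicit Arguments. Unset Strict Implicit.

Section Proofs.
Variable R : realDomainType.
Implicit Types p q r : pt R.

Lemma lexle_trans : transitive (@lexle R).
Proof.
move=> q p r; rewrite /lexle.
case/orP=> [lt1|/andP[/eqP e1 le2]]; case/orP=> [lt2|/andP[/eqP e2 le3]].
- by rewrite (lt_trans lt1 lt2).
- by rewrite -e2 lt1.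
- by rewrite e1 lt2.
- by rewrite e1 e2 eqxx (le_trans le2 le3) orbT.
Qed.

Lemma lexle_total p q : lexle p q || lexle q p.
Proof.
rewrite /lexle; case: (ltgtP p.1 q.1) => //= e; exact: le_total.
Qed.

Lemma lexle_add p q b : lexle p q -> lexle (padd p b) (padd q b).
Proof.
by rewrite /lexle /padd /= ltrD2r lerD2r (inj_eq (addIr b.1)).
Qed.

Lemma lexle_x p q : lexle p q -> (p.1 <= q.1).
Proof. by case/orP=> [/ltW|/andP[/eqP-> _]]. Qed.

Lemma later_nodom q e : lexle q e -> ~~ dominates e q.
Proof.
rewrite /lexle /dominates; case: q e => [q1 q2] [e1 e2] /=.
case/orP=> [lt1|/andP[/eqP e1' le2]].
  by rewrite (leNgt e1) lt1 /= andbF.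
rewrite e1' lexx /= xpair_eqE eqxx /=.
apply/negP=> /andP[ne le]; move: ne; by rewrite eq_le le le2.
Qed.

Lemma nodom_self p : ~~ dominates p p.
Proof. by rewrite /dominates eqxx. Qed.

Definition cstep (C : seq (pt R)) (e : pt R) :=
  if (C == [::]) || ~~ (dominates (last 0 C) e || (last 0 C == e)) then rcons C e else C.

Definition Cinv (P C : seq (pt R)) :=
  [/\ uniq C, (forall p, (p \in C) = (p \in P) && all (fun q => ~~ dominates q p) P),
      (C == [::]) = (P == [::]) & (forall q, q \in P -> (last 0 C).2 <= q.2)].

Lemma Cinv0 : Cinv [::] [::].
Proof. by split. Qed.

Lemma cstep_inv P C e : Cinv P C -> (forall q, q \in P -> lexle q e) ->
  Cinv (rcons P e) (cstep C e) /\ (size C <= size (cstep C e))%N.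
Proof.
case=> uC memC eC lastC le_e.
have nd_old p : p \in P -> ~~ dominates e p by move=> /le_e /later_nodom.
rewrite /cstep; case: eqP => [C0|/eqP Cn] /=.
  move: eC; rewrite C0 eqxx => /esym/eqP P0; subst.
  split=> //; split=> //=.
  - move=> p; rewrite !inE andbT; case: eqP => // ->.
    by rewrite /dominates eqxx.
  - by move=> q; rewrite inE => /eqP->.
have cC : last 0 C \in C by case: C Cn {memC eC lastC uC} => // c C' _; rewrite /=; exact: mem_last.
move: (cC); rewrite memC => /andP[cP ndc].
set c := last 0 C in cC cP ndc lastC *.
have lce := le_e _ cP.
case: ifP => [Hb|Hb].
  have lt2 : e.2 < c.2.
    move: Hb; rewrite negb_or => /andP[nd ne].
    move: nd; rewrite /dominates ne (lexle_x lce) /=; by rewrite ltNge.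
  have eC' : e \notin C.
    by apply/negP; rewrite memC => /andP[/lastC]; rewrite leNgt lt2.
  split; last by rewrite size_rcons.
  split.
  - by rewrite rcons_uniq eC' uC.
  - move=> p; rewrite mem_rcons in_cons mem_rcons in_cons all_rcons.
    case: eqP => [->|ne] /=.
      rewrite /dominates eqxx /=; apply/esym/allP=> q qP.
      apply/negP=> /and3P[_ _ le]; have := lastC _ qP.
      by rewrite leNgt (le_lt_trans le lt2).
    rewrite memC; case pP: (p \in P) => //=.
    by rewrite nd_old // andbT.
  - by rewrite -!size_eq0 !size_rcons.
  - rewrite last_rcons => q; rewrite mem_rcons in_cons => /orP[/eqP->//|qP].
    exact: le_trans (ltW lt2) (lastC _ qP).
move/negbFE: Hb => Hb.
split=> //; split=> //.
- move=> p; rewrite mem_rcons in_cons all_rcons.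
  case: (p =P e) => [->|ne].
    rewrite nodom_self /=.
    case/orP: Hb => [dce|/eqP ce].
      have nall : ~~ all (fun q => ~~ dominates q e) P.
        by apply/negP => /allP/(_ _ cP); rewrite dce.
      rewrite (negbTE nall); apply/negbTE/negP; rewrite memC => /andP[_]; exact/negP.
    by rewrite -ce cC ndc.
  rewrite /= memC; case pP: (p \in P) => //=.
  by rewrite nd_old // andbT.
- by rewrite (negbTE Cn) -size_eq0 size_rcons.
- move=> q; rewrite mem_rcons in_cons => /orP[/eqP->|qP]; last exact: lastC.
  case/orP: Hb => [/and3P[_ _ //]|/eqP <-]; exact: lexx.
Qed.



Lemma sorted_adj (A : seq (pt R)) i : sorted (@lexlt R) A -> (i.+1 < size A)%N ->
  lexle (nth 0 A i) (nth 0 A i.+1).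
Proof.
case: A => // a A /= /(pathP 0)/(_ i) H /ltnSE lt.
have := H lt; rewrite /lexlt /lexle => /orP[->//|/andP[-> /ltW ->]]; by rewrite orbT.
Qed.

Definition pot n (h : seq (hentry R)) := sumn [seq (n - e.2.1)%N | e <- h].


Definition Inv (A B : seq (pt R)) (n k : nat) (h : seq (hentry R)) (C : seq (pt R)) (t s : nat) :=
  exists P : seq (pt R),
  [/\ Cinv P C,
      (forall e, e \in h -> [/\ e.2.1 < n, e.2.2 < n & e.1 = mink A B e.2.1 e.2.2])%N,
      (size h <= n)%N,
      (forall q e, q \in P -> e \in h -> lexle q e.1)
    & [/\       (forall i j, i < n -> j < n -> (mink A B i j \in P) \/ exists e, [/\ e \in h, e.2.2 = j & e.2.1 <= i])%N,
      (forall q, q \in P -> q \in mink_entries A B),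
      (h = [::] \/ pot n h + k <= n * n)%N,
      (t <= n * hcost n + k * (hcost n).*2.+1)%N
    & (s <= n + size C)%N ] ].

Definition InvS A B n k (st : state R) := let: (h, C, t, s) := st in Inv A B n k h C t s.

Lemma hcost_mono a b : (a <= b)%N -> (hcost a <= hcost b)%N.
Proof. by move=> ab; rewrite /hcost ltnS leq_trunc_log. Qed.

Lemma mink_in (A B : seq (pt R)) i j : (i < size A)%N -> (j < size B)%N -> mink A B i j \in mink_entries A B.
Proof. by move=> iA jB; apply: allpairs_f; apply: mem_nth. Qed.

Lemma lexle_refl p : lexle p p.
Proof. by rewrite /lexle eqxx lexx orbT. Qed.

Lemma has_min (s : seq (hentry R)) : s != [::] ->
  has (fun e : hentry R => all (fun e' : hentry R => lexle e.1 e'.1) s) s.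
Proof.
move=> sn.
suff [m mS mP] : exists2 m, m \in s & forall y, y \in s -> lexle m.1 y.1.
  by apply/hasP; exists m => //; apply/allP.
elim: s sn => // y s IH _.
case: (eqVneq s [::]) => [->|sn].
  by exists y; rewrite ?inE // => z; rewrite inE => /eqP->; exact: lexle_refl.
have [m mS mP] := IH sn.
case/orP: (lexle_total m.1 y.1) => my.
  exists m; first by rewrite inE mS orbT.
  by move=> z; rewrite inE => /orP[/eqP->//|]; exact: mP.
exists y; first by rewrite inE eqxx.
move=> z; rewrite inE => /orP[/eqP->|zS]; first exact: lexle_refl.
exact: lexle_trans my (mP _ zS).
Qed.

Lemma inv_step (A B : seq (pt R)) n k st : sorted (@lexlt R) A -> size A = n -> size B = n ->
  InvS A B n k st -> InvS A B n k.+1 (sc_step A B n st).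
Proof.
move=> sA sAn sBn.
case: st => [[[h C] t] s]; rewrite /InvS.
case: h => [|x h'].
  have -> : sc_step A B n ([::], C, t, s) = ([::], C, t, s) by [].
  move=> [P [Ci H1 H2 H3 [H4 H5 H6 H7 H8]]]; exists P; split=> //; split=> //; first by left.
  by apply: (leq_trans H7); rewrite leq_add2l leq_mul2r leqnSn orbT.
move=> [P [Ci H1 H2 H3 [H4 H5 H6 H7 H8]]].
rewrite /sc_step.
set hh := x :: h'.
set a := (fun e : hentry R => all _ hh).
set i0 := find a hh.
set e := nth x hh i0.
set h1 := take i0 hh ++ drop i0.+1 hh.
rewrite -/(cstep C e.1).
have hasa : has a hh by apply: has_min.
have i0lt : (i0 < size hh)%N by rewrite -has_find.
have eIn : e \in hh by apply: mem_nth.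
have emin : forall y, y \in hh -> lexle e.1 y.1.
  by move=> y yh; have /allP := nth_find x hasa; apply.
have spl : hh = take i0 hh ++ e :: drop i0.+1 hh by rewrite -(drop_nth x i0lt) cat_take_drop.
have memh : forall y, (y \in hh) = (y == e) || (y \in h1).
  by move=> y; rewrite {1}spl !mem_cat in_cons orbCA.
have sizeh : size hh = (size h1).+1 by rewrite {1}spl !size_cat /= addnS.
have poth : pot n hh = (pot n h1 + (n - e.2.1))%N.
  by rewrite /pot {1}spl /h1 !map_cat !sumn_cat /=; lia.
case: (H1 e eIn) => ilt jlt pe.
have [Ci' szC] := cstep_inv Ci (fun q qP => H3 q e qP eIn).
clear spl; move: ilt jlt pe eIn emin memh poth Ci' szC.
case: e => p [i j] /= ilt jlt pe eIn emin memh poth Ci' szC.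
have col : (i.+1 < n)%N -> lexle p (mink A B i.+1 j).
  move=> lt; rewrite pe; apply: lexle_add; apply: sorted_adj => //; by rewrite sAn.
have h1sz : (size h1 <= n)%N by move: H2; rewrite -/hh sizeh; apply: leq_trans.
have c1 : (hcost (size h').+1 <= hcost n)%N by apply: hcost_mono.
have c2 : (hcost (size h1) <= hcost n)%N by apply: hcost_mono.
have h1h : forall y, y \in h1 -> y \in hh by move=> y yh1; rewrite memh yh1 orbT.
have pP : p \in rcons P p by rewrite mem_rcons mem_head.
have H6' : (pot n h1 + (n - i) + k <= n * n)%N.
  by case: H6 => // H6; move: H6; rewrite -/hh poth.
case: ifP => Hn /=.
  exists (rcons P p); split; [exact: Ci'| | | | split].
  - move=> y; rewrite mem_rcons in_cons => /orP[/eqP->/=|yh1]; first by split.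
    by apply: H1; apply: h1h.
  - by rewrite size_rcons -sizeh.
  - move=> q y; rewrite mem_rcons in_cons => /orP[/eqP->|qP];
      rewrite mem_rcons in_cons => /orP[/eqP->|yh1] /=.
    + exact: col.
    + by apply: emin; apply: h1h.
    + exact: lexle_trans (H3 _ _ qP eIn) (col Hn).
    + by apply: H3 => //; apply: h1h.
  - move=> i' j' i'n j'n; case: (H4 _ _ i'n j'n) => [mP|[y [yh yj yi]]].
      by left; rewrite mem_rcons in_cons mP orbT.
    move: yh; rewrite memh => /orP[/eqP ye|yh1].
      subst y; move: yj yi => /= <- yi.
      rewrite leq_eqVlt in yi; case/orP: yi => [/eqP <-|lt].
        by left; rewrite -pe.
      right; exists (mink A B i.+1 j, (i.+1, j)); split=> //.
      by rewrite mem_rcons mem_head.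
    by right; exists y; rewrite mem_rcons in_cons yh1 orbT.
  - move=> q; rewrite mem_rcons in_cons => /orP[/eqP->|/H5//].
    by rewrite pe; apply: mink_in; rewrite ?sAn ?sBn.
  - right; rewrite /pot map_rcons -cats1 sumn_cat /= -/(pot n h1); lia.
  - rewrite mulSn; nia.
  - have hsz : ((size h1).+1 <= n)%N by rewrite -sizeh.
    rewrite size_rcons; lia.
exists (rcons P p); split; [exact: Ci'| | | | split].
- by move=> y yh1; apply: H1; apply: h1h.
- by [].
- move=> q y; rewrite mem_rcons in_cons => /orP[/eqP->|qP] yh1.
  + by apply: emin; apply: h1h.
  + by apply: H3 => //; apply: h1h.
- move=> i' j' i'n j'n; case: (H4 _ _ i'n j'n) => [mP|[y [yh yj yi]]].
    by left; rewrite mem_rcons in_cons mP orbT.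
  move: yh; rewrite memh => /orP[/eqP ye|yh1].
    subst y; move: yj yi => /= <- yi.
    rewrite leq_eqVlt in yi; case/orP: yi => [/eqP <-|lt].
      by left; rewrite -pe.
    by move: Hn; have -> : (i.+1 < n)%N by apply: leq_ltn_trans lt i'n.
  by right; exists y; rewrite yh1.
- move=> q; rewrite mem_rcons in_cons => /orP[/eqP->|/H5//].
  by rewrite pe; apply: mink_in; rewrite ?sAn ?sBn.
- right; move/negbT: Hn; rewrite -leqNgt => Hn; lia.
- rewrite mulSn; nia.
- lia.
Qed.

Lemma sumn_map_const (T : Type) (s : seq T) (f : T -> nat) c :
  (forall x, f x = c) -> sumn (map f s) = (size s * c)%N.
Proof. by move=> fc; elim: s => //= y s ->; rewrite fc mulSn. Qed.

Lemma size_le_pot n (h : seq (hentry R)) :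
  (forall e, e \in h -> e.2.1 < n)%N -> (size h <= pot n h)%N.
Proof.
elim: h => //= y h IH H; rewrite /pot /= -/(pot n h).
have : (size h <= pot n h)%N by apply: IH => e eh; apply: H; rewrite inE eh orbT.
have := H y (mem_head _ _); move=> lt le; rewrite addnC -addn1 leq_add // subn_gt0; exact: lt.
Qed.

Lemma inv_init (A B : seq (pt R)) n : InvS A B n 0 (sc_init A B n).
Proof.
rewrite /sc_init /InvS.
set h0 := [seq _ | j <- iota 0 n].
have memh0 : forall e, e \in h0 -> exists2 j, (j < n)%N & e = (mink A B 0 j, (0%N, j)).
  by move=> e /mapP[j]; rewrite mem_iota add0n => /andP[_ jn] ->; exists j.
exists [::]; split; [exact: Cinv0 | | | | split] => //.
- move=> e /memh0 [j jn ->] /=; split=> //; exact: leq_ltn_trans (leq0n j) jn.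
- by rewrite size_map size_iota.
- move=> i j i_n jn; right; exists (mink A B 0 j, (0%N, j)); split=> //.
  by apply/mapP; exists j; rewrite // mem_iota.
- right; rewrite addn0 /pot /h0 -map_comp (sumn_map_const _ (c := n)) ?size_iota //.
  by move=> j /=; rewrite subn0.
- rewrite mul0n addn0.
  apply: (@leq_trans (\sum_(j < n) hcost n)).
    by apply: leq_sum => j _; apply: hcost_mono; exact: ltnW.
  by rewrite sum_nat_const card_ord.
- by rewrite size_map size_iota addn0.
Qed.

Lemma inv_iter (A B : seq (pt R)) n k : sorted (@lexlt R) A -> size A = n -> size B = n ->
  InvS A B n k (iter k (sc_step A B n) (sc_init A B n)).
Proof.
move=> sA sAn sBn; elim: k => [|k IH] /=; first exact: inv_init.
exact: inv_step.
Qed.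

End Proofs.

Theorem mainTheorem5 :
  exists c : nat,
  forall (R : realDomainType) (n : nat) (A B : seq (pt R)),
    size A = n -> size B = n ->
    sorted_pareto A -> sorted_pareto B ->
    let: (heap, C, time, space) := sort_compare A B n in
    [/\ heap = [::],
        uniq C,
        (forall p : pt R, (p \in C) = in_pareto_sum A B p),
        (2 <= n)%N -> (time <= c * (n ^ 2 * trunc_log 2 n))%N
      & (space <= c * (n + pareto_sum_size A B))%N].
Proof.
exists 7%N => R n A B sAn sBn pA pB.
have sA : sorted (@lexlt R) A by case/andP: pA.
have := inv_iter (n * n) sA sAn sBn.
rewrite /sort_compare.
case: (iter _ _ _) => [[[h C] t] s] /= [P [[uC memC _ _] H1 H2 H3 [H4 H5 H6 H7 H8]]].
have h0 : h = [::].
  case: H6 => // H6.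
  have Hs : (size h <= pot n h)%N by apply: size_le_pot => e eh; case: (H1 e eh).
  have : pot n h = 0%N by move: H6; set m := (n * n)%N; set q := pot n h; lia.
  by move=> p0; move: Hs; rewrite p0 leqn0 size_eq0 => /eqP.
subst h.
have memP : P =i mink_entries A B.
  move=> p; apply/idP/idP; first exact: H5.
  case/allpairsP => [[a b] /= [aA bB ->]].
  have ia : (index a A < n)%N by rewrite -sAn index_mem.
  have ib : (index b B < n)%N by rewrite -sBn index_mem.
  case: (H4 _ _ ia ib) => [|[y [//]]].
  by rewrite /mink !nth_index.
have memC' : forall p, (p \in C) = in_pareto_sum A B p.
  by move=> p; rewrite memC memP (eq_all_r memP).
split=> //.
- move=> n2; have L1 : (0 < trunc_log 2 n)%N by rewrite trunc_log_gt0.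
  move: H7; rewrite /hcost -mulnn -!mul2n; nia.
- have -> : pareto_sum_size A B = size C.
    apply/esym/perm_size/uniq_perm; rewrite ?undup_uniq //.
    move=> p; rewrite mem_undup mem_filter memC' /in_pareto_sum.
    by case: (p \in mink_entries A B); rewrite /= ?andbT.
  lia.
Qed.
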